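(* $\mathrm{HS}_{\mathsf{lin}}$ is at least exponentially more succinct than $\mathrm{LTL}$: there is a family of $\mathrm{HS}$ formulas $(\psi_n)_{n\ge1}$ such that, for every $n$, no $\mathrm{LTL}$ formula equivalent to $\psi_n$ (equivalence meaning: for every finite Kripke structure $K$, $K\models_{\mathsf{lin}}\psi_n$ iff $K\models\varphi$) has size bounded by a polynomial in $|\psi_n|$.
   Context: A Kripke structure over a finite set $\mathcal{AP}$ of proposition letters is $K=(\mathcal{AP},S,\delta,\mu,s_0)$ with state set $S$, left-total transition relation $\delta\subseteq S\times S$, labelling $\mu:S\to 2^{\mathcal{AP}}$, initial state $s_0$; $K$ is finite if $S$ is finite. An infinite path is an infinite sequence $\pi$ of states with $(\pi(i),\pi(i+1))\in\delta$; it is initial if $\pi(0)=s_0$. The size $|\varphi|$ of a formula is its number of symbols/subformulas. $\mathrm{HS}$ formulas: $\psi::=p\mid\neg\psi\mid\psi\wedge\psi\mid\langle X\rangle\psi$, $X$ ranging over the Allen relations $A,L,B,E,D,O$ and their inverses $\bar A,\dots,\bar O$; $[X]\psi:=\neg\langle X\rangle\neg\psi$. Under the non-strict semantics all modalities are definable from $\langle B\rangle,\langle E\rangle,\langle\bar B\rangle,\langle\bar E\rangle$. Trace-based semantics: for an infinite path $\pi$, intervals are $[i,j]$ with $0\le i\le j$; $[i,j]\models p$ iff $p\in\mu(\pi(h))$ for all $i\le h\le j$; $[x,y]\models\langle B\rangle\psi$ iff $[x,z]\models\psi$ for some $x\le z<y$; $[x,y]\models\langle E\rangle\psi$ iff $[v,y]\models\psi$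 for some $x<v\le y$; $[x,y]\models\langle\bar B\rangle\psi$ iff $[x,z]\models\psi$ for some $z>y$; $[x,y]\models\langle\bar E\rangle\psi$ iff $[v,y]\models\psi$ for some $v<x$. $K\models_{\mathsf{lin}}\psi$ iff for every initial infinite path $\pi$ and every $i\ge0$, $[0,i]\models\psi$ in $\pi$; $\mathrm{HS}_{\mathsf{lin}}$ is $\mathrm{HS}$ under this semantics. $\mathrm{LTL}$: $\varphi::=\top\mid p\mid\neg\varphi\mid\varphi\wedge\varphi\mid\mathsf X\varphi\mid\varphi\,\mathsf U\,\varphi$ with the standard semantics over infinite paths; $K\models\varphi$ iff $\pi,0\models\varphi$ for every initial infinite path $\pi$. *)

(* Defs.v *)
From mathcomp Require Import all_boot.
Set Implicit Arguments. Unset Strict Implicit. Unset Printing Implicit Defensive.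

Definition prop_letter := nat.

Record kripke := Kripke {
  kstate : finType;
  kdelta : kstate -> kstate -> Prop;
  kmu : kstate -> prop_letter -> bool;
  ks0 : kstate }.

Definition left_total (K : kripke) : Prop :=
  forall s : kstate K, exists s' : kstate K, kdelta s s'.

Definition is_path (K : kripke) (pi : nat -> kstate K) : Prop :=
  forall i, kdelta (pi i) (pi i.+1).

Definition is_initial_path (K : kripke) (pi : nat -> kstate K) : Prop :=
  is_path pi /\ pi 0 = ks0 K.

Inductive allen := rA | rL | rB | rE | rD | rO
                 | rAbar | rLbar | rBbar | rEbar | rDbar | rObar.

Inductive hs :=
| HProp : prop_letter -> hs
| HNot : hs -> hs
| HAnd : hs -> hs -> hs
| HDia : allen -> hs -> hs.

Fixpoint hs_size (f : hs) : nat :=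
  match f with
  | HProp _ => 1
  | HNot g => (hs_size g).+1
  | HAnd g h => (hs_size g + hs_size h).+1
  | HDia _ g => (hs_size g).+1
  end.

(* Non-strict Allen relations: [x,y] R [w,z], intervals [i,j] with i <= j. *)
Definition allen_rel (X : allen) (x y w z : nat) : Prop :=
  match X with
  | rA    => w = y /\ y <= z
  | rAbar => z = x /\ w <= x
  | rL    => y < w /\ w <= z
  | rLbar => w <= z /\ z < x
  | rB    => w = x /\ x <= z /\ z < y
  | rBbar => w = x /\ y < z
  | rE    => z = y /\ x < w /\ w <= y
  | rEbar => z = y /\ w < x
  | rD    => x < w /\ w <= z /\ z < y
  | rDbar => w < x /\ y < z
  | rO    => x < w /\ w <= y /\ y < z
  | rObar => w < x /\ x <= z /\ z < y
  end.

Fixpoint hs_sat (K : kripke) (pi : nat -> kstate K) (f : hs) (x y : nat) : Prop :=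
  match f with
  | HProp p => forall h, x <= h <= y -> kmu (pi h) p
  | HNot g => ~ hs_sat pi g x y
  | HAnd g h => hs_sat pi g x y /\ hs_sat pi h x y
  | HDia X g => exists w z, w <= z /\ allen_rel X x y w z /\ hs_sat pi g w z
  end.

Definition hs_lin_models (K : kripke) (f : hs) : Prop :=
  forall pi : nat -> kstate K, is_initial_path pi -> forall i, hs_sat pi f 0 i.

Inductive ltl :=
| LTop : ltl
| LProp : prop_letter -> ltl
| LNot : ltl -> ltl
| LAnd : ltl -> ltl -> ltl
| LNext : ltl -> ltl
| LUntil : ltl -> ltl -> ltl.

Fixpoint ltl_size (f : ltl) : nat :=
  match f with
  | LTop => 1
  | LProp _ => 1
  | LNot g => (ltl_size g).+1
  | LAnd g h => (ltl_size g + ltl_size h).+1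
  | LNext g => (ltl_size g).+1
  | LUntil g h => (ltl_size g + ltl_size h).+1
  end.

Fixpoint ltl_sat (K : kripke) (pi : nat -> kstate K) (f : ltl) (i : nat) : Prop :=
  match f with
  | LTop => True
  | LProp p => kmu (pi i) p
  | LNot g => ~ ltl_sat pi g i
  | LAnd g h => ltl_sat pi g i /\ ltl_sat pi h i
  | LNext g => ltl_sat pi g i.+1
  | LUntil g h => exists j, i <= j /\ ltl_sat pi h j /\
                    forall k, i <= k < j -> ltl_sat pi g k
  end.

Definition ltl_models (K : kripke) (f : ltl) : Prop :=
  forall pi : nat -> kstate K, is_initial_path pi -> ltl_sat pi f 0.

Definition hs_ltl_equiv (psi : hs) (phi : ltl) : Prop :=
  forall K : kripke, left_total K -> (hs_lin_models K psi <-> ltl_models K phi).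

(* Main.v *)
Require Import Defs.
From mathcomp Require Import all_boot zify.
From Stdlib Require Import Classical ClassicalEpsilon FunctionalExtensionality.
Set Implicit Arguments. Unset Strict Implicit. Unset Printing Implicit Defensive.

Definition sh (K : kripke) (pi : nat -> kstate K) : nat -> kstate K := fun j => pi j.+1.

Lemma ltl_shift K (pi : nat -> kstate K) f i :
  ltl_sat (sh pi) f i <-> ltl_sat pi f i.+1.
Proof.
elim: f i => [|p|g IH|g IHg h IHh|g IH|g IHg h IHh] i /=.
- done.
- done.
- by split => H1 H2; apply: H1; apply/IH.
- by split => -[H1 H2]; split; (apply/IHg || apply/IHh).
- exact: IH.
- split => -[j [ij [Hh Hg]]].
  + exists j.+1; split => //; split; first exact/IHh.
    case=> [|k] /andP [k1 k2] //; apply/IHg; apply/Hg; lia.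
  + case: j ij Hh Hg => [|j] ij Hh Hg; first lia.
    exists j; split; first lia; split; first exact/IHh.
    move=> k /andP [k1 k2]; apply/IHg; apply/Hg; lia.
Qed.

Lemma ltl_unfold K (pi : nat -> kstate K) g h i :
  ltl_sat pi (LUntil g h) i <->
  ltl_sat pi h i \/ (ltl_sat pi g i /\ ltl_sat pi (LUntil g h) i.+1).
Proof.
rewrite /=; split.
- move=> [j [ij [Hh Hg]]].
  have [E|ne] := eqVneq j i; first by left; rewrite -E.
  right; split; first by apply: Hg; lia.
  exists j; split; first lia; split => // k Hk; apply: Hg; lia.
- case=> [Hh|[Hg [j [ij [Hh Hg']]]]].
  + by exists i; split => //; split => // k; lia.
  + exists j; split; first lia; split => // k Hk.
    have [->|ne] := eqVneq k i => //; apply: Hg'; lia.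
Qed.

Lemma ltl_lab (K1 K2 : kripke) (p1 : nat -> kstate K1) (p2 : nat -> kstate K2) :
  (forall j, kmu (p1 j) =1 kmu (p2 j)) -> forall f i, ltl_sat p1 f i <-> ltl_sat p2 f i.
Proof.
move=> E; elim => [|p|g IH|g IHg h IHh|g IH|g IHg h IHh] i /=.
- done.
- by rewrite E.
- by split => H1 H2; apply: H1; apply/IH.
- by split => -[H1 H2]; split; (apply/IHg || apply/IHh).
- exact: IH.
- split => -[j [ij [Hh Hg]]]; exists j; split => //; split; try exact/IHh;
  move=> k Hk; apply/IHg; exact: Hg.
Qed.

Fixpoint agree K1 K2 (p1 : nat -> kstate K1) (p2 : nat -> kstate K2) (f : ltl) : Prop :=
  (ltl_sat p1 f 0 <-> ltl_sat p2 f 0) /\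
  match f with
  | LNot g | LNext g => agree p1 p2 g
  | LAnd g h | LUntil g h => agree p1 p2 g /\ agree p1 p2 h
  | _ => True end.

Lemma agree_hd K1 K2 (p1 : nat -> kstate K1) (p2 : nat -> kstate K2) f :
  agree p1 p2 f -> (ltl_sat p1 f 0 <-> ltl_sat p2 f 0).
Proof. by case: f => [|p|g|g h|g|g h] []. Qed.

Lemma step K1 K2 (p1 : nat -> kstate K1) (p2 : nat -> kstate K2) :
  kmu (p1 0) =1 kmu (p2 0) -> forall f, agree (sh p1) (sh p2) f ->
  (ltl_sat p1 f 0 <-> ltl_sat p2 f 0).
Proof.
move=> E; elim => [|p|g IH|g IHg h IHh|g IH|g IHg h IHh] /=.
- done.
- by move=> _; rewrite E.
- move=> [_ A]; have := IH A; by split => H1 H2; apply: H1; apply/(IH A).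
- move=> [_ [A B]]; have := IHg A; have := IHh B; tauto.
- move=> [_ /agree_hd A]; split => H.
  + by apply/ltl_shift; apply/A; apply/ltl_shift.
  + by apply/ltl_shift; apply/A; apply/ltl_shift.
- move=> [C [A B]].
  have U1 := ltl_unfold p1 g h 0. have U2 := ltl_unfold p2 g h 0.
  have S1 := ltl_shift p1 (LUntil g h) 0. have S2 := ltl_shift p2 (LUntil g h) 0.
  have := IHg A; have := IHh B.
  simpl in U1, U2, S1, S2, C |- *. tauto.
Qed.

Definition bsat K (p : nat -> kstate K) f : bool :=
  if excluded_middle_informative (ltl_sat p f 0) then true else false.

Lemma bsatP K (p : nat -> kstate K) f : bsat p f = true <-> ltl_sat p f 0.
Proof. rewrite /bsat; case: excluded_middle_informative => //. Qed.

Lemma bsat_eq K1 K2 (p1 : nat -> kstate K1) (p2 : nat -> kstate K2) f :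
  (ltl_sat p1 f 0 <-> ltl_sat p2 f 0) -> bsat p1 f = bsat p2 f.
Proof.
rewrite /bsat => H.
destruct (excluded_middle_informative (ltl_sat p1 f 0));
destruct (excluded_middle_informative (ltl_sat p2 f 0)) => //; exfalso; tauto.
Qed.

Fixpoint sub f := f :: match f with
  | LNot g | LNext g => sub g
  | LAnd g h | LUntil g h => sub g ++ sub h
  | _ => [::] end.

Lemma size_sub f : size (sub f) = ltl_size f.
Proof. by elim: f => //= [g ->|g IHg h IHh|g ->|g IHg h IHh]; rewrite ?size_cat ?IHg ?IHh. Qed.

Definition tvec K (p : nat -> kstate K) f := map (bsat p) (sub f).

Lemma tvec_agree K1 K2 (p1 : nat -> kstate K1) (p2 : nat -> kstate K2) f :
  tvec p1 f = tvec p2 f -> agree p1 p2 f.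
Proof.
have hd : forall g, bsat p1 g = bsat p2 g -> (ltl_sat p1 g 0 <-> ltl_sat p2 g 0).
  by move=> g E; rewrite -!bsatP E.
rewrite /tvec; elim: f => [|p|g IH|g IHg h IHh|g IH|g IHg h IHh] E; split;
  try (first [by apply: hd; move: E => /= [->] | by apply: hd; move: E => /= [-> _]]);
  rewrite //=; move: E => /= [_ E2]; rewrite ?map_cat in E2.
- exact: IH.
- move/eqP: E2; rewrite eqseq_cat ?size_map // => /andP [/eqP ? /eqP ?].
  by split; [apply: IHg|apply: IHh].
- exact: IH.
- move/eqP: E2; rewrite eqseq_cat ?size_map // => /andP [/eqP ? /eqP ?].
  by split; [apply: IHg|apply: IHh].
Qed.

Lemma tvec_lab (K1 K2 : kripke) (p1 : nat -> kstate K1) (p2 : nat -> kstate K2) f :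
  (forall j, kmu (p1 j) =1 kmu (p2 j)) -> tvec p1 f = tvec p2 f.
Proof. move=> E; apply: eq_map => g; apply: bsat_eq; exact: ltl_lab. Qed.

Definition Htop := HNot (HAnd (HProp 0) (HNot (HProp 0))).
Definition Hpt := HNot (HDia rB Htop).
Definition HsB p := HDia rB (HAnd Hpt (HProp p)).
Definition HsE p := HDia rE (HAnd Hpt (HProp p)).
Definition Hiff a b := HAnd (HNot (HAnd a (HNot b))) (HNot (HAnd b (HNot a))).
Fixpoint Hagree i := match i with
  | 0 => Htop | i'.+1 => HAnd (Hagree i') (Hiff (HsB i') (HsE i')) end.
Definition HM n := HAnd (HsE n) (Hagree n).
Definition psi n := HNot (HAnd Hpt (HNot (HDia rBbar (HM n)))).

Lemma psi_size n : hs_size (psi n) = 48 * n + 27.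
Proof.
have H : forall i, hs_size (Hagree i) = 48 * i + 5 by elim=> //= i ->; lia.
by rewrite /= H; lia.
Qed.

Section HSsem.
Variable K : kripke.
Variable pi : nat -> kstate K.

Lemma Htop_sat x y : hs_sat pi Htop x y.
Proof. by move=> /= [H1 H2]. Qed.

Lemma Hpt_sat x y : x <= y -> (hs_sat pi Hpt x y <-> x = y).
Proof.
move=> xy /=; split.
- move=> H; apply/eqP; apply/negPn/negP => ne; apply: H.
  exists x, x; split => //; split; first by split => //; lia.
  exact: Htop_sat.
- move=> -> [w [z [_ [[_ [H1 H2]] _]]]]; lia.
Qed.

Lemma HsB_sat p x y : x < y -> (hs_sat pi (HsB p) x y <-> kmu (pi x) p).
Proof.
move=> xy /=; split.
- move=> [w [z [wz [[-> [xz zy]] [Hp Hq]]]]].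
  apply: Hq; lia.
- move=> H; exists x, x; split => //; split; first by split => //; lia.
  split; first exact/(Hpt_sat (leqnn x)).
  by move=> h hx; have -> : h = x by lia.
Qed.

Lemma HsE_sat p x y : x < y -> (hs_sat pi (HsE p) x y <-> kmu (pi y) p).
Proof.
move=> xy /=; split.
- move=> [w [z [wz [[-> [xz zy]] [Hp Hq]]]]].
  apply: Hq; lia.
- move=> H; exists y, y; split => //; split; first by split => //; lia.
  split; first exact/(Hpt_sat (leqnn y)).
  by move=> h hx; have -> : h = y by lia.
Qed.

Lemma Hiff_sat a b x y :
  hs_sat pi (Hiff a b) x y <-> (hs_sat pi a x y <-> hs_sat pi b x y).
Proof.
rewrite /=; split.
- move=> [H1 H2]; split => Ha; apply: NNPP => Hb; tauto.
- tauto.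
Qed.

Lemma Hagree_sat i x y : x < y ->
  (hs_sat pi (Hagree i) x y <-> forall j, j < i -> kmu (pi x) j = kmu (pi y) j).
Proof.
move=> xy; elim: i => [|i IH].
- by split => // _; exact: Htop_sat.
- rewrite [Hagree _]/= [hs_sat _ (HAnd _ _) _ _]/=.
  have E := Hiff_sat (HsB i) (HsE i) x y.
  have EB := HsB_sat i xy. have EE := HsE_sat i xy.
  split.
  + move=> [/IH A /E B] j; rewrite ltnS leq_eqVlt => /orP [/eqP ->|jl]; last exact: A.
    apply/idP/idP => H1.
    * by apply/EE; apply/B; apply/EB.
    * by apply/EB; apply/B; apply/EE.
  + move=> H; split; first by apply/IH => j jl; apply: H; lia.
    apply/E; have := H i (ltnSn i) => Hi.
    split => H1; [apply/EE; rewrite -Hi; exact/EB | apply/EB; rewrite Hi; exact/EE].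
Qed.

Lemma psi_lin n :
  (forall i, hs_sat pi (psi n) 0 i) <->
  exists z, 0 < z /\ kmu (pi z) n /\ forall j, j < n -> kmu (pi 0) j = kmu (pi z) j.
Proof.
split.
- move=> /(_ 0) /= H.
  have H' : hs_sat pi (HDia rBbar (HM n)) 0 0.
    apply: NNPP => H2; apply: H; split => //; exact/(Hpt_sat (leqnn 0)).
  move: H' => /= [w [z [wz [[-> z0] [HE HA]]]]].
  exists z; split => //; split; first exact/(HsE_sat n z0).
  exact/(Hagree_sat n z0).
- move=> [z [z0 [Hz Ha]]] i /= [Hp Hn]; apply: Hn.
  move/(Hpt_sat (leq0n i)): Hp => <-.
  exists 0, z; split => //; split => //; split; first exact/(HsE_sat n z0).
  exact/(Hagree_sat n z0).
Qed.
End HSsem.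

Definition Sig n := {ffun 'I_n -> bool}.

Definition labF n (s : Sig n) (qv : bool) (p : nat) : bool :=
  if (insub p : option 'I_n) is Some i then s i else (p == n) && qv.

Lemma labF_lt n (s : Sig n) qv j (H : j < n) : labF s qv j = s (Ordinal H).
Proof. by rewrite /labF insubT. Qed.

Lemma labF_n n (s : Sig n) qv : labF s qv n = qv.
Proof. by rewrite /labF insubF ?ltnn // eqxx. Qed.

Definition fill : nat -> bool := fun _ => false.

Definition lab n (a : Sig n) (S : {set Sig n}) (j : nat) : nat -> bool :=
  if j is j'.+1 then
    (if j' < size (enum S) then labF (nth [ffun => false] (enum S) j') true else fill)
  else labF a false.

Definition Nn n := #|{: Sig n}|.+1.

Definition nxt n (x : 'I_(Nn n).+1) : 'I_(Nn n).+1 := inord (minn x.+1 (Nn n)).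

Definition Kr n (a : Sig n) (S : {set Sig n}) : kripke :=
  @Kripke _ (fun x y : 'I_(Nn n).+1 => y = nxt x) (fun x => lab a S x) ord0.

Definition cpath n : nat -> 'I_(Nn n).+1 := fun i => inord (minn i (Nn n)).

Lemma cpath_val n i : nat_of_ord (cpath n i) = minn i (Nn n).
Proof. rewrite /cpath inordK //; rewrite ltnS; exact: geq_minr. Qed.

Lemma nxt_val n (x : 'I_(Nn n).+1) : nat_of_ord (nxt x) = minn x.+1 (Nn n).
Proof. rewrite /nxt inordK //; rewrite ltnS; exact: geq_minr. Qed.

Lemma cpath_init n (a : Sig n) S : @is_initial_path (Kr a S) (cpath n).
Proof.
split.
- move=> i /=; apply: val_inj; rewrite /= nxt_val !cpath_val; lia.
- by apply: val_inj; rewrite /= cpath_val /=; lia.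
Qed.

Lemma init_unique n (a : Sig n) S (p : nat -> kstate (Kr a S)) :
  is_initial_path p -> p = cpath n.
Proof.
move=> [Hp H0]; apply: functional_extensionality; elim => [|i IH].
- by rewrite H0; apply: val_inj; rewrite /= cpath_val /=; lia.
- rewrite (Hp i) /= IH; apply: val_inj; rewrite /= nxt_val !cpath_val; lia.
Qed.

Lemma lab_cpath n (a : Sig n) S j : kmu (k := Kr a S) (cpath n j) = lab a S j.
Proof.
rewrite /= cpath_val.
have [//|Nj] := leqP j (Nn n).
have hs : size (enum S) <= #|{: Sig n}| by rewrite -cardE; exact: max_card.
case: j Nj => [|j] Nj //=; rewrite /Nn in Nj *.
by rewrite ltnNge hs /= ifF //; apply/negbTE; rewrite -leqNgt; apply: (leq_trans hs); lia.
Qed.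

Lemma models_ltl n (a : Sig n) S phi :
  ltl_models (Kr a S) phi <-> ltl_sat (K := Kr a S) (cpath n) phi 0.
Proof.
split; first by move=> H; apply: H; exact: cpath_init.
by move=> H p /init_unique ->.
Qed.

Lemma hs_char n (a : Sig n) S : hs_lin_models (Kr a S) (psi n) <-> a \in S.
Proof.
have E : hs_lin_models (Kr a S) (psi n) <-> forall i, hs_sat (K := Kr a S) (cpath n) (psi n) 0 i.
  split; first by move=> H; apply: H; exact: cpath_init.
  by move=> H p /init_unique ->.
apply: iff_trans E _; apply: iff_trans (psi_lin _ _) _.
split.
- move=> [[|z] [z0 [Hz Ha]]] //.
  move: Hz Ha; rewrite !lab_cpath /=; case: ifP => zs; last by rewrite /fill.
  move=> _ Ha; rewrite -mem_enum.
  have -> : a = nth [ffun => false] (enum S) z; last exact: mem_nth.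
  apply/ffunP => i; have := Ha _ (ltn_ord i).
  rewrite !labF_lt; have -> // : Ordinal (ltn_ord i) = i by apply: val_inj.
- move=> aS; exists (index a (enum S)).+1; split => //.
  rewrite !lab_cpath /= index_mem mem_enum aS nth_index ?mem_enum //; split; first by rewrite labF_n.
  by move=> j jn; rewrite !labF_lt.
Qed.

Lemma Kr_total n (a : Sig n) S : left_total (Kr a S).
Proof. by move=> x; exists (nxt x). Qed.

Lemma count_lb n phi : hs_ltl_equiv (psi n) phi -> 2 ^ n <= ltl_size phi.
Proof.
move=> Heq.
pose a0 : Sig n := [ffun => false].
pose V (S : {set Sig n}) := tvec (sh (K := Kr a0 S) (cpath n)) phi.
have sV : forall S, size (V S) = ltl_size phi by move=> S; rewrite size_map size_sub.
pose F (S : {set Sig n}) : {ffun 'I_(ltl_size phi) -> bool} := [ffun i : 'I_(ltl_size phi) => nth false (V S) i].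
have key : forall (a : Sig n) (S : {set Sig n}), a \in S <-> ltl_sat (K := Kr a S) (cpath n) phi 0.
  move=> a S; have := Heq _ (@Kr_total n a S); have := models_ltl a S phi;
  have := hs_char a S; tauto.
have Finj : injective F.
  move=> S T E.
  have EV : V S = V T.
    apply: (eq_from_nth (x0 := false)); first by rewrite !sV.
    move=> i; rewrite sV => Hi.
    by have := congr1 (fun f : {ffun _ -> bool} => f (Ordinal Hi)) E; rewrite /= !ffunE.
  apply/setP => a.
  have tS : tvec (sh (K := Kr a S) (cpath n)) phi = V S.
    by apply: tvec_lab => j; rewrite /sh !lab_cpath.
  have tT : tvec (sh (K := Kr a T) (cpath n)) phi = V T.
    by apply: tvec_lab => j; rewrite /sh !lab_cpath.
  have ag := tvec_agree (etrans tS (etrans EV (esym tT))).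
  have st := step (K1 := Kr a S) (K2 := Kr a T) (p1 := cpath n) (p2 := cpath n).
  have l0 : kmu (k := Kr a S) (cpath n 0) =1 kmu (k := Kr a T) (cpath n 0).
    by move=> p; rewrite !lab_cpath.
  have st' := st l0 phi ag.
  have kS := key a S; have kT := key a T.
  by apply/idP/idP => H; [apply/kT; apply/st'; apply/kS | apply/kS; apply/st'; apply/kT].
have := leq_card F Finj.
rewrite card_ffun card_bool card_ord => H.
have H2 : #|powerset [set: Sig n]| <= #|{: {set Sig n}}| by exact: max_card.
rewrite card_powerset cardsT card_ffun card_bool card_ord in H2.
by rewrite -(@leq_exp2l 2) //; apply: leq_trans H2 H.
Qed.


Lemma pow_mono m n e : m <= n -> m ^ e <= n ^ e.
Proof. by move=> mn; elim: e => // e IH; rewrite !expnS leq_mul. Qed.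

Lemma Dlem x k : (x + 1) ^ k.+1 <= x ^ k.+1 + k.+1 * (x + 1) ^ k.
Proof.
elim: k => [|k IH]; first by rewrite !expn1 expn0; lia.
have h : x ^ k.+1 <= (x + 1) ^ k.+1 by apply: pow_mono; lia.
have h2 := leq_mul (leqnn (x + 1)) IH.
have hP : (x + 1) ^ k.+1 = (x + 1) * (x + 1) ^ k by rewrite expnS.
rewrite (expnS (x + 1) k.+1) (expnS x k.+1).
move: h h2 hP; set A := x ^ k.+1; set B := (x + 1) ^ k; set P := (x + 1) ^ k.+1.
nia.
Qed.

Lemma poly_exp k : forall c, exists N, forall n, N <= n -> c * n ^ k < 2 ^ n.
Proof.
elim: k => [|k IHk] c.
  exists c => n cn; rewrite expn0 muln1.
  exact: leq_ltn_trans cn (ltn_expl n (ltnSn 1)).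
have [N HN] := IHk (2 * c * k.+1 * 2 ^ k).
pose N1 := maxn N 1.
have H : forall t, 2 * (c * (N1 + t) ^ k.+1) <= 2 * (c * N1 ^ k.+1) + 2 ^ (N1 + t).
  elim => [|t IHt]; first by rewrite addn0 leq_addr.
  have x1 : 1 <= N1 + t by rewrite /N1; lia.
  have xN : N <= N1 + t by rewrite /N1; lia.
  have hD := Dlem (N1 + t) k.
  have h2 : (N1 + t + 1) ^ k <= 2 ^ k * (N1 + t) ^ k.
    by rewrite -expnMn; apply: pow_mono; lia.
  have h3 := HN _ xN.
  have h4 := leq_mul (leqnn (2 * c)) hD.
  have h5 := leq_mul (leqnn (2 * c * k.+1)) h2.
  have e1 : N1 + t.+1 = (N1 + t) + 1 by lia.
  rewrite e1 (_ : 2 ^ (N1 + t + 1) = 2 * 2 ^ (N1 + t)); last by rewrite addn1 expnS.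
  move: IHt h3 h4 h5; set x := N1 + t; set A := x ^ k.+1; set B := (x + 1) ^ k.
  set C := x ^ k; set P := (x + 1) ^ k.+1; set E := 2 ^ x; set Z := N1 ^ k.+1.
  set T := 2 ^ k. nia.
exists (maxn N1 (2 * (c * N1 ^ k.+1))) => n Hn.
have := H (n - N1); rewrite subnKC; last by lia.
have := ltn_expl n (ltnSn 1).
set Z := 2 * (c * N1 ^ k.+1); set Y := c * n ^ k.+1; lia.
Qed.

Theorem theorem3p5 :
  exists psi : nat -> hs,
    forall c k : nat, exists N : nat, forall n : nat, N <= n ->
      forall phi : ltl, hs_ltl_equiv (psi n) phi ->
        c * hs_size (psi n) ^ k + c < ltl_size phi.
Proof.
exists psi => c k.
have [N HN] := poly_exp k (c * 75 ^ k + c).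
exists (maxn N 1) => n Hn phi Heq.
have Hc := count_lb Heq.
rewrite psi_size.
have h1 : (48 * n + 27) ^ k <= 75 ^ k * n ^ k by rewrite -expnMn; apply: pow_mono; lia.
have h2 : 0 < n ^ k by rewrite expn_gt0; apply/orP; left; lia.
have h3 := HN n ltac:(lia).
have h4 := leq_mul (leqnn c) h1.
move: h3 h4; set X := (48 * n + 27) ^ k; set Y := n ^ k; set W := 75 ^ k; nia.
Qed.
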